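(* Let $X,Y$ be compact metric spaces with metrics $d,d'$, and let $f\colon X\to X$, $g\colon Y\to Y$ be continuous maps. Let $C\in\mathcal{C}(f)$, $D\in\mathcal{D}(C)$, $C'\in\mathcal{C}(g)$, and let $h\colon C\to C'$ be a homeomorphism with $h\circ f|_C=g|_{C'}\circ h$ (then $h(D)\in\mathcal{D}(C')$). Let $\mathcal{F},\mathcal{G}$ be full Furstenberg families, $n\ge2$ and $\delta>0$. If $g$ has the s-limit shadowing property and $V^s(D)$ is dense $(\mathcal{F},\mathcal{G})$-$n$-$\delta$-chaotic for $f$, then there is $\delta'>0$ such that $V^s(h(D))$ is dense $(\mathcal{F},\mathcal{G})$-$n$-$\delta'$-chaotic for $g$.
   Context: The following is defined for any continuous self-map $f$ of a compact metric space $(X,d)$ (and analogously for $g$ on $(Y,d')$). A $\delta$-chain of $f$ ($\delta>0$) is a finite sequence $(x_i)_{i=0}^k$, $k\ge1$, with $d(f(x_i),x_{i+1})\le\delta$ for $0\le i\le k-1$; it is a $\delta$-cycle if $x_0=x_k$, with length $k$. Write $x\to y$ if for every $\delta>0$ there is a $\delta$-chain from $x$ to $y$. Let $CR(f)=\{x\colon x\to x\}$; on $CR(f)$ let $x\leftrightarrow y$ iff $x\to y$ and $y\to x$; its classes are the chain components, forming $\mathcal{C}(f)$. For $C\in\mathcal{C}(f)$, $\delta>0$, let $m=m(C,\delta)$ be the gcd of the lengths of all $\delta$-cycles of $f|_C$, and for $x,y\in C$ let $x\sim_{C,\delta}y$ iff there is a $\delta$-chain of $f|_C$ from $x$ to $y$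 of length divisible by $m$; $\mathcal{D}(C,\delta)$ is the set of its equivalence classes. Let $x\sim_C y$ iff $x\sim_{C,\delta}y$ for all $\delta>0$; $\mathcal{D}(C)$ is its set of classes. For $D\in\mathcal{D}(C)$, $D_\delta$ is the element of $\mathcal{D}(C,\delta)$ containing $D$. $W^s(C)=\{x\colon\lim_i d(f^i(x),C)=0\}$ and $V^s(D)=\bigcap_{\delta>0}\{x\in W^s(C)\colon\lim_i d(f^i(x),f^i(D_\delta))=0\}$. $g$ has the s-limit shadowing property if for every $\epsilon>0$ there is $\delta>0$ such that for every sequence $(y_i)_{i\ge0}$ with $d'(g(y_i),y_{i+1})\le\delta$ for all $i$ and $d'(g(y_i),y_{i+1})\to0$ there is $y\in Y$ with $d'(g^i(y),y_i)\le\epsilon$ for all $i$ and $d'(g^i(y),y_i)\to0$. A Furstenberg family is a nonempty proper family $\mathcal{F}\subsetneq 2^{\mathbb{N}_0}$ closed under taking supersets; it is full if $\{i\in A\colon i\ge n\}\in\mathcal{F}$ for all $A\in\mathcal{F}$, $n\ge0$. For $x_1,\dots,x_n\in X$, $r>0$: $S_f(x_1,\dots,x_n;r)=\{i\in\mathbb{N}_0\colon\min_{j<k}d(f^i(x_j),f^i(x_k))>r\}$ and $T_f(x_1,\dots,x_n;r)=\{i\in\mathbb{N}_0\colon\max_{j<k}d(f^i(x_j),f^i(x_k))<r\}$. $(x_1,\dots,x_n)$ is $(\mathcal{F},\mathcal{G})$-$\delta$-scrambled for $f$ if $S_f(x_1,\dots,x_n;\delta)\in\mathcal{F}$ and $T_f(x_1,\dots,x_n;\epsilon)\in\mathcal{G}$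 for all $\epsilon>0$. A nonempty $Z\subset X$ is dense $(\mathcal{F},\mathcal{G})$-$n$-$\delta$-chaotic for $f$ if the set of $(\mathcal{F},\mathcal{G})$-$\delta$-scrambled $n$-tuples in $Z^n$ is dense in $Z^n$ (analogously for $g$). *)

(* Defs.v *)
From Stdlib Require Import Reals List Arith.
Open Scope R_scope.
Set Implicit Arguments.

Section Defs.
Variables (X : Type) (d : X -> X -> R).

Definition iter (f : X -> X) (i : nat) (x : X) : X := Nat.iter i f x.

Definition is_metric : Prop :=
  (forall x y, 0 <= d x y) /\ (forall x y, d x y = 0 <-> x = y) /\
  (forall x y, d x y = d y x) /\ (forall x y z, d x z <= d x y + d y z).

Definition open_set (U : X -> Prop) : Prop :=
  forall x, U x -> exists r, 0 < r /\ forall y, d x y < r -> U y.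

Definition compact_space : Prop :=
  forall (I : Type) (U : I -> X -> Prop), (forall i, open_set (U i)) ->
    (forall x, exists i, U i x) ->
    exists l : list I, forall x, exists i, In i l /\ U i x.

Variable f : X -> X.

Definition chain (del : R) (xs : nat -> X) (k : nat) : Prop :=
  (1 <= k)%nat /\ forall i, (i < k)%nat -> d (f (xs i)) (xs (S i)) <= del.

Definition chain_rel (x y : X) : Prop :=
  forall del, 0 < del -> exists xs k, chain del xs k /\ xs 0%nat = x /\ xs k = y.

Definition CR (x : X) : Prop := chain_rel x x.

Definition chain_component (C : X -> Prop) : Prop :=
  exists x, CR x /\ forall y, C y <-> (CR y /\ chain_rel x y /\ chain_rel y x).

Definition chain_in (C : X -> Prop) (del : R) (xs : nat -> X) (k : nat) : Prop :=
  chain del xs k /\ forall i, (i <= k)%nat -> C (xs i).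

Definition cycle_length_in (C : X -> Prop) (del : R) (k : nat) : Prop :=
  exists xs, chain_in C del xs k /\ xs 0%nat = xs k.

Definition is_cycle_gcd (C : X -> Prop) (del : R) (m : nat) : Prop :=
  (forall k, cycle_length_in C del k -> Nat.divide m k) /\
  (forall m', (forall k, cycle_length_in C del k -> Nat.divide m' k) -> Nat.divide m' m).

Definition sim_Cd (C : X -> Prop) (del : R) (x y : X) : Prop :=
  C x /\ C y /\ exists m, is_cycle_gcd C del m /\
    exists xs k, chain_in C del xs k /\ xs 0%nat = x /\ xs k = y /\ Nat.divide m k.

Definition sim_C (C : X -> Prop) (x y : X) : Prop :=
  forall del, 0 < del -> sim_Cd C del x y.

Definition D_class (C D : X -> Prop) : Prop :=
  exists x, C x /\ forall y, D y <-> (C y /\ sim_C C x y).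

(* D_delta : the element of D(C,delta) containing D *)
Definition D_delta (C D : X -> Prop) (del : R) (y : X) : Prop :=
  C y /\ exists x, D x /\ sim_Cd C del x y.

(* W^s(C): lim d(f^i x, C) = 0, with d(p,C) < eps iff some c in C has d(p,c) < eps *)
Definition Ws (C : X -> Prop) (x : X) : Prop :=
  forall eps, 0 < eps -> exists N, forall i, (N <= i)%nat ->
    exists c, C c /\ d (iter f i x) c < eps.

Definition Vs (C D : X -> Prop) (x : X) : Prop :=
  forall del, 0 < del -> Ws C x /\
    forall eps, 0 < eps -> exists N, forall i, (N <= i)%nat ->
      exists y, D_delta C D del y /\ d (iter f i x) (iter f i y) < eps.

(* S_f(x_1,...,x_n; r) and T_f(x_1,...,x_n; r); tuples indexed by 0..n-1 *)
Definition S_set (n : nat) (xs : nat -> X) (r : R) (i : nat) : Prop :=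
  forall j k, (j < k)%nat -> (k < n)%nat -> r < d (iter f i (xs j)) (iter f i (xs k)).

Definition T_set (n : nat) (xs : nat -> X) (r : R) (i : nat) : Prop :=
  forall j k, (j < k)%nat -> (k < n)%nat -> d (iter f i (xs j)) (iter f i (xs k)) < r.

Definition scrambled (F G : (nat -> Prop) -> Prop) (n : nat) (del : R) (xs : nat -> X) : Prop :=
  F (S_set n xs del) /\ forall eps, 0 < eps -> G (T_set n xs eps).

Definition dense_chaotic (F G : (nat -> Prop) -> Prop) (n : nat) (del : R) (Z : X -> Prop) : Prop :=
  (exists z, Z z) /\
  forall zs : nat -> X, (forall j, (j < n)%nat -> Z (zs j)) ->
    forall eps, 0 < eps -> exists ws : nat -> X,
      (forall j, (j < n)%nat -> Z (ws j)) /\ scrambled F G n del ws /\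
      (forall j, (j < n)%nat -> d (ws j) (zs j) < eps).

End Defs.

Definition continuous_map {X Y : Type} (d : X -> X -> R) (d' : Y -> Y -> R) (f : X -> Y) : Prop :=
  forall x eps, 0 < eps -> exists del, 0 < del /\ forall y, d x y < del -> d' (f x) (f y) < eps.

Definition homeo_on {X Y : Type} (d : X -> X -> R) (d' : Y -> Y -> R)
  (C : X -> Prop) (C' : Y -> Prop) (h : X -> Y) : Prop :=
  (forall x, C x -> C' (h x)) /\
  (forall x x', C x -> C x' -> h x = h x' -> x = x') /\
  (forall y, C' y -> exists x, C x /\ h x = y) /\
  (forall x eps, C x -> 0 < eps -> exists del, 0 < del /\
     forall x', C x' -> d x x' < del -> d' (h x) (h x') < eps) /\
  (forall x eps, C x -> 0 < eps -> exists del, 0 < del /\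
     forall x', C x' -> d' (h x) (h x') < del -> d x x' < eps).

Definition image {X Y : Type} (h : X -> Y) (D : X -> Prop) (y : Y) : Prop :=
  exists x, D x /\ h x = y.

Definition s_limit_shadowing {Y : Type} (d' : Y -> Y -> R) (g : Y -> Y) : Prop :=
  forall eps, 0 < eps -> exists del, 0 < del /\
    forall ys : nat -> Y,
      (forall i, d' (g (ys i)) (ys (S i)) <= del) ->
      (forall eta, 0 < eta -> exists N, forall i, (N <= i)%nat -> d' (g (ys i)) (ys (S i)) < eta) ->
      exists y, (forall i, d' (iter g i y) (ys i) <= eps) /\
        (forall eta, 0 < eta -> exists N, forall i, (N <= i)%nat -> d' (iter g i y) (ys i) < eta).

Definition furstenberg (F : (nat -> Prop) -> Prop) : Prop :=
  (exists A, F A) /\ (exists A, ~ F A) /\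
  (forall A B : nat -> Prop, F A -> (forall i, A i -> B i) -> F B).

Definition full_family (F : (nat -> Prop) -> Prop) : Prop :=
  forall (A : nat -> Prop) (n : nat), F A -> F (fun i => A i /\ (n <= i)%nat).

(* Main.v *)
Require Import Defs.
From Stdlib Require Import Reals Lra Lia List Arith ZArith Classical ClassicalEpsilon.
Notation iter := Defs.iter.
Open Scope R_scope.
Set Implicit Arguments.

Section Gen.
Variables (X : Type) (d : X -> X -> R) (f : X -> X).
Hypothesis Hm : is_metric d.

Lemma d_pos x y : 0 <= d x y. Proof. destruct Hm as [H _]; auto. Qed.
Lemma d_refl x : d x x = 0. Proof. destruct Hm as [_ [H _]]. apply H; auto. Qed.
Lemma d_sym x y : d x y = d y x. Proof. destruct Hm as [_ [_ [H _]]]; auto. Qed.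
Lemma d_tri x y z : d x z <= d x y + d y z. Proof. destruct Hm as [_ [_ [_ H]]]; auto. Qed.

Definition chn (P : X -> Prop) (del : R) (a b : X) (k : nat) : Prop :=
  exists xs, chain_in d f P del xs k /\ xs 0%nat = a /\ xs k = b.

Lemma chn_k P del a b k : chn P del a b k -> (1 <= k)%nat.
Proof. intros [xs [[[H _] _] _]]; auto. Qed.

Lemma chn_Pa P del a b k : chn P del a b k -> P a /\ P b.
Proof. intros [xs [[_ HP] [<- <-]]]; split; apply HP; lia. Qed.

Lemma chn_cat P del a b c k1 k2 :
  chn P del a b k1 -> chn P del b c k2 -> chn P del a c (k1 + k2).
Proof.
  intros [xs [[[Hk1 Hx] Px] [Hx0 Hxk]]] [ys [[[Hk2 Hy] Py] [Hy0 Hyk]]].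
  exists (fun i => if Nat.leb i k1 then xs i else ys (i - k1)%nat).
  assert (E1 : forall i, (i <= k1)%nat -> Nat.leb i k1 = true) by (intros; apply Nat.leb_le; lia).
  assert (E2 : forall i, (k1 < i)%nat -> Nat.leb i k1 = false) by (intros; apply Nat.leb_gt; lia).
  assert (E3 : forall i, (k1 <= i)%nat -> (if Nat.leb i k1 then xs i else ys (i - k1)%nat) = ys (i - k1)%nat).
  { intros i Hi. destruct (Nat.eq_dec i k1) as [->|Hne].
    - rewrite E1 by lia. rewrite Hxk, Nat.sub_diag; auto.
    - rewrite E2 by lia; auto. }
  split; [split; [split|]|split].
  - lia.
  - intros i Hi. destruct (Nat.lt_ge_cases i k1) as [Hl|Hl].
    + rewrite E1 by lia. rewrite E1 by lia. apply Hx; auto.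
    + rewrite E3 by lia. rewrite E3 by lia.
      replace (S i - k1)%nat with (S (i - k1)) by lia. apply Hy; lia.
  - intros i Hi. destruct (Nat.le_gt_cases i k1) as [Hl|Hl].
    + rewrite E1 by lia; apply Px; auto.
    + rewrite E2 by lia; apply Py; lia.
  - rewrite E1 by lia; auto.
  - rewrite E3 by lia. replace (k1 + k2 - k1)%nat with k2 by lia; auto.
Qed.

Lemma chn_mono P del del' a b k : del <= del' -> chn P del a b k -> chn P del' a b k.
Proof.
  intros Hd [xs [[[Hk Hx] Px] E]]. exists xs; split; [split; [split|]|]; auto.
  intros i Hi; specialize (Hx i Hi); lra.
Qed.

Lemma chn_P P Q del a b k : (forall x, P x -> Q x) -> chn P del a b k -> chn Q del a b k.
Proof.
  intros HPQ [xs [[Hc Px] E]]. exists xs; split; [split|]; auto.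
Qed.

Lemma chn_last P del del2 a b b' k : chn P del a b k -> P b' -> d b b' <= del2 ->
  chn P (del + del2) a b' k.
Proof.
  intros [xs [[[Hk Hx] Px] [E0 Ek]]] Pb' Hbb.
  exists (fun i => if Nat.eqb i k then b' else xs i).
  split; [split; [split|]|split].
  - auto.
  - intros i Hi. assert (Nat.eqb i k = false) as -> by (apply Nat.eqb_neq; lia).
    destruct (Nat.eqb_spec (S i) k) as [Heq|Hne].
    + pose proof (Hx i Hi). rewrite Heq, Ek in H.
      pose proof (d_tri (f (xs i)) b b'). lra.
    + pose proof (Hx i Hi). pose proof (d_pos b b'). lra.
  - intros i Hi. destruct (Nat.eqb i k); auto.
  - assert (Nat.eqb 0 k = false) as -> by (apply Nat.eqb_neq; lia). auto.
  - rewrite Nat.eqb_refl; auto.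
Qed.

Lemma chn_first P del del2 a a' b k : chn P del a b k -> P a' -> d (f a') (f a) <= del2 ->
  chn P (del + del2) a' b k.
Proof.
  intros [xs [[[Hk Hx] Px] [E0 Ek]]] Pa' Haa.
  exists (fun i => if Nat.eqb i 0 then a' else xs i).
  split; [split; [split|]|split].
  - auto.
  - intros i Hi. simpl. destruct (Nat.eqb_spec i 0) as [->|Hne].
    + pose proof (Hx 0%nat Hi). rewrite E0 in H.
      pose proof (d_tri (f a') (f a) (xs 1%nat)). lra.
    + pose proof (Hx i Hi). pose proof (d_pos (f a') (f a)). lra.
  - intros i Hi. destruct (Nat.eqb i 0); auto.
  - auto.
  - destruct (Nat.eqb_spec k 0); [lia|auto].
Qed.

Lemma iter_S g i (x : X) : iter g (S i) x = g (iter g i x).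
Proof. reflexivity. Qed.

Lemma iter_S_r g i (x : X) : iter g (S i) x = iter g i (g x).
Proof. unfold iter. apply Nat.iter_succ_r. Qed.

Lemma chn_orbit P del a t : 0 <= del -> (forall x, P x -> P (f x)) -> P a -> (1 <= t)%nat ->
  chn P del a (iter f t a) t.
Proof.
  intros Hd Hinv Pa Ht. exists (fun i => iter f i a). split; [split; [split|]|split]; auto.
  - intros i Hi. rewrite iter_S, d_refl; auto.
  - intros i Hi. clear Hi. induction i; simpl; auto.
Qed.

Lemma chain_rel_chn a b : chain_rel d f a b <-> forall del, 0 < del -> exists k, chn (fun _ => True) del a b k.
Proof.
  split.
  - intros H del Hd. destruct (H del Hd) as [xs [k [Hc [E0 Ek]]]].
    exists k, xs. split; [split|]; auto.
  - intros H del Hd. destruct (H del Hd) as [k [xs [[Hc _] [E0 Ek]]]].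
    exists xs, k; auto.
Qed.

Lemma chain_rel_trans a b c : chain_rel d f a b -> chain_rel d f b c -> chain_rel d f a c.
Proof.
  rewrite !chain_rel_chn. intros H1 H2 del Hd.
  destruct (H1 del Hd) as [k1 C1]; destruct (H2 del Hd) as [k2 C2].
  exists (k1 + k2)%nat; eapply chn_cat; eauto.
Qed.

End Gen.
Section Comp.
Variables (X : Type) (d : X -> X -> R).
Hypothesis Hm : is_metric d.
Hypothesis Hc : compact_space d.

Lemma list_min (I : Type) (r : I -> R) (l : list I) :
  (forall i, In i l -> 0 < r i) -> exists m, 0 < m /\ forall i, In i l -> m <= r i.
Proof.
  induction l as [|a l IH]; intros H.
  - exists 1; split; [lra|]. intros i [].
  - destruct IH as [m [Hm0 Hm1]]. { intros; apply H; right; auto. }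
    exists (Rmin m (r a)). split.
    + apply Rmin_glb_lt; auto. apply H; left; auto.
    + intros i [<-|Hi]. apply Rmin_r. eapply Rle_trans; [apply Rmin_l|]; auto.
Qed.

Lemma ball_open c r : Defs.open_set d (fun x => d c x < r).
Proof.
  intros x Hx. exists (r - d c x). split; [lra|].
  intros y Hy. pose proof (d_tri Hm c x y). lra.
Qed.

Lemma cover_fin (I : Type) (c : I -> X) (r : I -> R) :
  (forall x, exists i, d (c i) x < r i) ->
  exists l : list I, forall x, exists i, In i l /\ d (c i) x < r i.
Proof.
  intros Hcov. apply (Hc (fun i x => d (c i) x < r i)); auto.
  intros i; apply ball_open.
Qed.

Definition closedP (K : X -> Prop) := forall x, ~ K x -> exists r, 0 < r /\ forall y, d x y < r -> ~ K y.

Lemma unif (K : X -> Prop) (Q : X -> X -> Prop) : closedP K ->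
  (forall x, K x -> exists r, 0 < r /\ forall y1 y2, K y1 -> K y2 -> d x y1 < r -> d x y2 < r -> Q y1 y2) ->
  exists r, 0 < r /\ forall y1 y2, K y1 -> K y2 -> d y1 y2 < r -> Q y1 y2.
Proof.
  intros HK Hloc.
  set (I := {p : X * R | 0 < snd p /\ ((K (fst p) /\ forall y1 y2, K y1 -> K y2 -> d (fst p) y1 < 2 * snd p -> d (fst p) y2 < 2 * snd p -> Q y1 y2) \/ (~ K (fst p) /\ forall y, d (fst p) y < snd p -> ~ K y))}).
  destruct (cover_fin (I := I) (fun i => fst (proj1_sig i)) (fun i => snd (proj1_sig i))) as [l Hl].
  { intros x. destruct (classic (K x)) as [Kx|Kx].
    - destruct (Hloc x Kx) as [r [Hr Hq]].
      assert (P : 0 < snd (x, r/2) /\ ((K (fst (x, r/2)) /\ forall y1 y2, K y1 -> K y2 -> d (fst (x, r/2)) y1 < 2 * snd (x, r/2) -> d (fst (x, r/2)) y2 < 2 * snd (x,r/2) -> Q y1 y2) \/ (~ K (fst (x,r/2)) /\ forall y, d (fst (x,r/2)) y < snd (x,r/2) -> ~ K y))).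
      { simpl. split; [lra|]. left. split; auto. intros y1 y2 K1 K2 H1 H2. apply Hq; auto; lra. }
      exists (exist _ (x, r/2) P). simpl. rewrite (d_refl Hm). lra.
    - destruct (HK x Kx) as [r [Hr Hq]].
      assert (P : 0 < snd (x, r) /\ ((K (fst (x, r)) /\ forall y1 y2, K y1 -> K y2 -> d (fst (x, r)) y1 < 2 * snd (x, r) -> d (fst (x, r)) y2 < 2 * snd (x,r) -> Q y1 y2) \/ (~ K (fst (x,r)) /\ forall y, d (fst (x,r)) y < snd (x,r) -> ~ K y))).
      { simpl. split; auto. }
      exists (exist _ (x, r) P). simpl. rewrite (d_refl Hm). lra. }
  destruct (list_min (fun i : I => snd (proj1_sig i)) l) as [m [Hm0 Hm1]].
  { intros [[x r] [Hr Hr2]] Hin; simpl; auto. }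
  exists m. split; auto. intros y1 y2 K1 K2 H12.
  destruct (Hl y1) as [[[x r] [Hr Hor]] [Hin Hd]]. simpl in *.
  specialize (Hm1 _ Hin). simpl in Hm1.
  destruct Hor as [[Kx Hq]|[Kx Hq]].
  - apply Hq; auto; try lra. pose proof (d_tri Hm x y1 y2). lra.
  - exfalso; apply (Hq y1); auto.
Qed.

End Comp.
Section CC.
Variables (X : Type) (d : X -> X -> R) (f : X -> X).
Hypothesis Hm : is_metric d.
Hypothesis Hc : compact_space d.
Unset Implicit Arguments.
Hypothesis Hf : continuous_map d d f.
Set Implicit Arguments.
Variable C : X -> Prop.
Hypothesis HC : chain_component d f C.

Lemma mem_C a z : C a -> chain_rel d f a z -> chain_rel d f z a -> C z.
Proof.
  intros Ca Haz Hza. destruct HC as [x0 [Cx0 HCx]].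
  apply HCx in Ca as [CRa [H0a Ha0]]. apply HCx. split; [|split].
  - unfold CR. apply (chain_rel_trans Hza Haz).
  - apply (chain_rel_trans H0a Haz).
  - apply (chain_rel_trans Hza Ha0).
Qed.

Lemma C_CR a : C a -> CR d f a.
Proof. intros Ca. destruct HC as [x0 [Cx0 HCx]]. apply HCx in Ca; tauto. Qed.

Lemma C_rel a b : C a -> C b -> chain_rel d f a b.
Proof.
  intros Ca Cb. destruct HC as [x0 [Cx0 HCx]].
  apply HCx in Ca as [? [? H1]]. apply HCx in Cb as [? [H2 ?]].
  apply (chain_rel_trans H1 H2).
Qed.

Lemma C_base : exists x0, C x0.
Proof.
  destruct HC as [x0 [Cx0 HCx]]. exists x0. apply HCx. split; auto.
Qed.

Lemma cc_closure z : (forall r, 0 < r -> exists c, C c /\ d z c < r) -> C z.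
Proof.
  intros Hz. destruct (Hz 1 ltac:(lra)) as [c0 [Cc0 _]].
  apply (mem_C Cc0).
  - apply chain_rel_chn. intros del Hd.
    destruct (Hz (del/2) ltac:(lra)) as [c [Cc Hzc]].
    pose proof (C_rel Cc0 Cc) as H. rewrite chain_rel_chn in H.
    destruct (H (del/2) ltac:(lra)) as [k Hk]. exists k.
    apply chn_mono with (del/2 + del/2); [lra|].
    eapply chn_last; eauto. rewrite d_sym; auto; lra.
  - apply chain_rel_chn. intros del Hd.
    destruct (Hf z (del/2) ltac:(lra)) as [rho [Hrho Hcont]].
    destruct (Hz rho Hrho) as [c [Cc Hzc]].
    pose proof (C_rel Cc Cc0) as H. rewrite chain_rel_chn in H.
    destruct (H (del/2) ltac:(lra)) as [k Hk]. exists k.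
    apply chn_mono with (del/2 + del/2); [lra|].
    eapply chn_first; eauto. specialize (Hcont c Hzc). lra.
Qed.

Lemma cc_closed : closedP d C.
Proof.
  intros x Hx. apply NNPP. intros Hn. apply Hx. apply cc_closure.
  intros r Hr. apply NNPP. intros Hn2. apply Hn. exists r. split; auto.
  intros y Hy Cy. apply Hn2. exists y. split; auto.
Qed.

Lemma chn_drop P del a b k : chn d f P del a b k -> (2 <= k)%nat ->
  exists p, d (f a) p <= del /\ chn d f P del p b (k - 1).
Proof.
  intros [xs [[[Hk Hx] Px] [E0 Ek]]] H2. exists (xs 1%nat). split.
  - rewrite <- E0. apply Hx; lia.
  - exists (fun i => xs (S i)). split; [split; [split|]|split].
    + lia.
    + intros i Hi. apply Hx. lia.
    + intros i Hi. apply Px; lia.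
    + auto.
    + replace (S (k-1)) with k by lia; auto.
Qed.

Lemma cc_inv x : C x -> C (f x).
Proof.
  intros Cx. apply (mem_C Cx).
  - apply chain_rel_chn. intros del Hd. exists 1%nat.
    apply (chn_orbit f Hm (fun _ => True) x (t := 1%nat)); auto; lra.
  - apply chain_rel_chn. intros del Hd.
    destruct (Hf (f x) (del/2) ltac:(lra)) as [rho [Hrho Hcont]].
    set (e := Rmin (del/2) (rho/2)).
    assert (He : 0 < e) by (apply Rmin_glb_lt; lra).
    pose proof (C_CR Cx) as H. unfold CR in H. rewrite chain_rel_chn in H.
    destruct (H e He) as [k Hk].
    pose proof (chn_cat Hk Hk) as Hk2.
    pose proof (chn_k Hk).
    destruct (chn_drop Hk2) as [p [Hp Hc2]]; [lia|].
    exists (k + k - 1)%nat.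
    apply chn_mono with (e + del/2).
    { unfold e. pose proof (Rmin_l (del/2) (rho/2)). lra. }
    eapply chn_first; eauto.
    assert (Hfp : d (f x) p < rho) by (unfold e in Hp; pose proof (Rmin_r (del/2) (rho/2)); lra).
    specialize (Hcont p Hfp). lra.
Qed.

Lemma cc_iter x i : C x -> C (iter f i x).
Proof. intros Cx; induction i; simpl; auto. apply cc_inv; auto. Qed.

Lemma chain_prefix del xs k i : chain d f del xs k -> (1 <= i)%nat -> (i <= k)%nat ->
  chn d f (fun _ => True) del (xs 0%nat) (xs i) i.
Proof.
  intros [Hk Hx] H1 H2. exists xs. split; [split; [split|]|]; auto.
  intros j Hj; apply Hx; lia.
Qed.

Lemma chain_suffix del xs k i : chain d f del xs k -> (i < k)%nat ->
  chn d f (fun _ => True) del (xs i) (xs k) (k - i).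
Proof.
  intros [Hk Hx] H1. exists (fun j => xs (i + j)%nat). split; [split; [split|]|split].
  - lia.
  - intros j Hj. replace (i + S j)%nat with (S (i + j)) by lia. apply Hx; lia.
  - auto.
  - f_equal; lia.
  - f_equal; lia.
Qed.

Lemma unif_f eps : 0 < eps -> exists r, 0 < r /\ forall y1 y2, d y1 y2 < r -> d (f y1) (f y2) < eps.
Proof.
  intros He.
  destruct (unif Hm Hc (K := fun _ => True) (fun y1 y2 => d (f y1) (f y2) < eps)) as [r [Hr Hq]].
  - intros x Hx; exfalso; auto.
  - intros x _. destruct (Hf x (eps/2) ltac:(lra)) as [r [Hr Hq]].
    exists r; split; auto. intros y1 y2 _ _ H1 H2.
    pose proof (Hq y1 H1). pose proof (Hq y2 H2).
    pose proof (d_tri Hm (f y1) (f x) (f y2)). rewrite (d_sym Hm (f y1) (f x)) in *. lra.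
  - exists r; split; auto.
Qed.

Definition Bad (a b : X) (th eps : R) (p : X) : Prop :=
  exists xs k i, chain d f eps xs k /\ xs 0%nat = a /\ xs k = b /\ (i <= k)%nat /\ xs i = p /\
    forall c, C c -> th <= d p c.

Lemma Bad_mono a b th e1 e2 p : e1 <= e2 -> Bad a b th e1 p -> Bad a b th e2 p.
Proof.
  intros He [xs [k [i [[Hk Hx] Hr]]]]. exists xs, k, i. split; auto. split; auto.
  intros j Hj. specialize (Hx j Hj). lra.
Qed.

Lemma cc_trans a b del : C a -> C b -> 0 < del -> exists k, chn d f C del a b k.
Proof.
  intros Ca Cb Hd.
  destruct (@unif_f (del/3) ltac:(lra)) as [th0 [Hth0 Hu]].
  set (th := Rmin th0 (del/3)).
  assert (Hth : 0 < th) by (apply Rmin_glb_lt; lra).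
  assert (Hth1 : th <= th0) by apply Rmin_l.
  assert (Hth2 : th <= del/3) by apply Rmin_r.
  assert (Claim : exists eps, 0 < eps /\ forall p, ~ Bad a b th eps p).
  { apply NNPP. intros Hn.
    assert (Hall : forall eps, 0 < eps -> exists p, Bad a b th eps p).
    { intros eps He. apply NNPP; intros Hn2. apply Hn. exists eps; split; auto.
      intros p Hp; apply Hn2; exists p; auto. }
    assert (Hz : exists z, forall r eps, 0 < r -> 0 < eps -> exists p, d z p < r /\ Bad a b th eps p).
    { apply NNPP. intros Hn3.
      assert (Hz : forall z, exists r eps, 0 < r /\ 0 < eps /\ forall p, d z p < r -> ~ Bad a b th eps p).
      { intros z. apply NNPP. intros Hn4. apply Hn3. exists z. intros r eps Hr He.
        apply NNPP. intros Hn5. apply Hn4. exists r, eps. split; auto. split; auto.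
        intros p Hp HB. apply Hn5. exists p; auto. }
      set (I := {q : X * R * R | 0 < snd (fst q) /\ 0 < snd q /\ forall p, d (fst (fst q)) p < snd (fst q) -> ~ Bad a b th (snd q) p}).
      destruct (cover_fin Hm Hc (I := I) (fun i => fst (fst (proj1_sig i))) (fun i => snd (fst (proj1_sig i)))) as [l Hl].
      { intros x. destruct (Hz x) as [r [eps [Hr [He Hq]]]].
        exists (exist (fun q : X * R * R => 0 < snd (fst q) /\ 0 < snd q /\ forall p, d (fst (fst q)) p < snd (fst q) -> ~ Bad a b th (snd q) p) (x, r, eps) (conj Hr (conj He Hq))).
        simpl. rewrite (d_refl Hm); auto. }
      destruct (list_min (fun i : I => snd (proj1_sig i)) l) as [m [Hm0 Hm1]].
      { intros [[[x r] e] [Hr [He Hq0]]] Hin0; simpl; auto. }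
      destruct (Hall m Hm0) as [p Hp].
      destruct (Hl p) as [[[[x r] e] [Hr [He Hq]]] [Hin Hdp]]. simpl in *.
      specialize (Hm1 _ Hin). simpl in Hm1.
      apply (Hq p Hdp). eapply Bad_mono; eauto. }
    destruct Hz as [z Hz].
    assert (Haz : chain_rel d f a z).
    { apply chain_rel_chn. intros eta Heta.
      destruct (Hz (eta/2) (eta/2) ltac:(lra) ltac:(lra)) as [p [Hzp [xs [k [i [Hch [E0 [Ek [Hik [Ei Hfar]]]]]]]]]].
      destruct (Nat.eq_dec i 0) as [->|Hi0].
      - pose proof (C_CR Ca) as H. unfold CR in H. rewrite chain_rel_chn in H.
        destruct (H (eta/2) ltac:(lra)) as [k' Hk']. exists k'.
        apply chn_mono with (eta/2 + eta/2); [lra|].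
        eapply chn_last; eauto. rewrite E0 in Ei. subst p. rewrite d_sym; auto; lra.
      - exists i. apply chn_mono with (eta/2 + eta/2); [lra|].
        pose proof (chain_prefix Hch (i := i) ltac:(lia) Hik) as H.
        rewrite E0, Ei in H. eapply chn_last; eauto. rewrite d_sym; auto; lra. }
    assert (Hzb : chain_rel d f z b).
    { apply chain_rel_chn. intros eta Heta.
      destruct (Hf z (eta/2) ltac:(lra)) as [rho [Hrho Hcont]].
      destruct (Hz rho (eta/2) Hrho ltac:(lra)) as [p [Hzp [xs [k [i [Hch [E0 [Ek [Hik [Ei Hfar]]]]]]]]]].
      specialize (Hcont p Hzp).
      destruct (Nat.eq_dec i k) as [->|Hik2].
      - pose proof (C_CR Cb) as H. unfold CR in H. rewrite chain_rel_chn in H.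
        destruct (H (eta/2) ltac:(lra)) as [k' Hk']. exists k'.
        apply chn_mono with (eta/2 + eta/2); [lra|].
        eapply chn_first; eauto. rewrite Ek in Ei. subst p. lra.
      - exists (k - i)%nat. apply chn_mono with (eta/2 + eta/2); [lra|].
        pose proof (chain_suffix Hch (i := i) ltac:(lia)) as H.
        rewrite Ek, Ei in H. eapply chn_first; eauto. lra. }
    assert (Cz : C z).
    { apply (mem_C Ca); auto. eapply chain_rel_trans; eauto. apply C_rel; auto. }
    destruct (Hz (th/2) 1 ltac:(lra) ltac:(lra)) as [p [Hzp [xs [k [i [_ [_ [_ [_ [Ei Hfar]]]]]]]]]].
    specialize (Hfar z Cz). rewrite d_sym in Hzp; auto. lra. }
  destruct Claim as [eps [He Hnb]].
  set (e := Rmin eps (del/3)).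
  assert (He0 : 0 < e) by (apply Rmin_glb_lt; lra).
  pose proof (C_rel Ca Cb) as H. rewrite chain_rel_chn in H.
  destruct (H e He0) as [k [xs [[[Hk Hx] _] [E0 Ek]]]].
  assert (Hnear : forall i, exists c, C c /\ ((i <= k)%nat -> d (xs i) c < th) /\ (i = 0%nat -> c = a) /\ (i = k -> c = b)).
  { intros i. destruct (Nat.eq_dec i 0) as [->|Hi0].
    { exists a. split; auto. split; [|split]; auto. intros. rewrite E0, d_refl; auto.
      intros; lia. }
    destruct (Nat.eq_dec i k) as [->|Hik].
    { exists b. split; auto. split; [|split]; auto. intros. rewrite Ek, d_refl; auto. intros; lia. }
    destruct (le_lt_dec i k) as [Hle|Hlt].
    - apply NNPP. intros Hn. apply (Hnb (xs i)). exists xs, k, i.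
      split. { split; auto. intros j Hj. specialize (Hx j Hj). unfold e in Hx.
               pose proof (Rmin_l eps (del/3)). lra. }
      split; auto. split; auto. split; auto. split; auto.
      intros c Cc. apply Rnot_lt_le. intros Hlt. apply Hn. exists c. split; auto.
      split; [|split]; intros; auto; lia.
    - exists a. split; auto. split; [|split]; intros; lia. }
  exists k. exists (fun i => proj1_sig (constructive_indefinite_description _ (Hnear i))).
  split; [split; [split|]|split].
  - auto.
  - intros i Hi.
    destruct (constructive_indefinite_description _ (Hnear i)) as [c1 [Cc1 [H1 H1']]].
    destruct (constructive_indefinite_description _ (Hnear (S i))) as [c2 [Cc2 [H2 H2']]]. simpl.
    specialize (H1 ltac:(lia)). specialize (H2 ltac:(lia)).
    assert (d (f c1) (f (xs i)) < del/3) by (apply Hu; rewrite d_sym; auto; lra).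
    specialize (Hx i Hi). unfold e in Hx. pose proof (Rmin_r eps (del/3)).
    pose proof (d_tri Hm (f c1) (f (xs i)) c2). pose proof (d_tri Hm (f (xs i)) (xs (S i)) c2). lra.
  - intros i Hi. destruct (constructive_indefinite_description _ (Hnear i)) as [c1 [Cc1 H1']]; auto.
  - destruct (constructive_indefinite_description _ (Hnear 0%nat)) as [c1 [Cc1 [H1' [H3 H2']]]]; simpl; auto.
  - destruct (constructive_indefinite_description _ (Hnear k)) as [c1 [Cc1 [H1' [H2' H3]]]]; simpl; auto.
Qed.

End CC.
Lemma nat_Z_divide (m k : nat) : Nat.divide m k <-> Z.divide (Z.of_nat m) (Z.of_nat k).
Proof.
  split.
  - intros [x ->]. exists (Z.of_nat x). lia.
  - intros [z Hz]. destruct (Nat.eq_dec m 0) as [->|Hm].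
    + simpl in Hz. assert (k = 0%nat) by lia. subst. exists 0%nat; lia.
    + assert (Hz0 : (0 <= z)%Z) by nia.
      exists (Z.to_nat z). apply Nat2Z.inj. rewrite Nat2Z.inj_mul, Z2Nat.id; auto.
Qed.

Lemma least_nat (P : nat -> Prop) : (exists n, P n) -> exists n, P n /\ forall m, P m -> (n <= m)%nat.
Proof.
  intros [n Hn]. induction n as [n IH] using (well_founded_induction lt_wf).
  destruct (classic (exists m, (m < n)%nat /\ P m)) as [[m [Hmn Pm]]|Hno].
  - apply (IH m Hmn Pm).
  - exists n. split; auto. intros m Pm. destruct (le_lt_dec n m); auto.
    exfalso; apply Hno; exists m; auto.
Qed.
Section Gcd.
Variables (X : Type) (d : X -> X -> R) (f : X -> X).
Hypothesis Hm : is_metric d.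
Hypothesis Hc : compact_space d.
Unset Implicit Arguments.
Hypothesis Hf : continuous_map d d f.
Set Implicit Arguments.
Variable C : X -> Prop.
Hypothesis HC : chain_component d f C.
Variable del : R.
Hypothesis Hdel : 0 < del.
Variable a : X.
Hypothesis Ca : C a.

Let cyc k := chn d f C del a a k.
Let S0 k := k = 0%nat \/ cyc k.
Let Gs (z : Z) := exists p q, S0 p /\ S0 q /\ z = (Z.of_nat p - Z.of_nat q)%Z.

Lemma S0_add p q : S0 p -> S0 q -> S0 (p + q).
Proof.
  intros [->|Hp] [->|Hq]; unfold S0; auto.
  - rewrite Nat.add_0_r; auto.
  - right. apply (chn_cat Hp Hq).
Qed.

Lemma Gs_sub z1 z2 : Gs z1 -> Gs z2 -> Gs (z1 - z2).
Proof.
  intros [p1 [q1 [P1 [Q1 ->]]]] [p2 [q2 [P2 [Q2 ->]]]].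
  exists (p1 + q2)%nat, (q1 + p2)%nat. split; [apply S0_add; auto|]. split; [apply S0_add; auto|]. lia.
Qed.

Lemma Gs_0 : Gs 0.
Proof. exists 0%nat, 0%nat. unfold S0. split; auto. Qed.

Lemma Gs_add z1 z2 : Gs z1 -> Gs z2 -> Gs (z1 + z2).
Proof.
  intros H1 H2. replace (z1 + z2)%Z with (z1 - (0 - z2))%Z by lia.
  apply Gs_sub; auto. apply Gs_sub; auto. apply Gs_0.
Qed.

Lemma Gs_mul_nat z (n : nat) : Gs z -> Gs (Z.of_nat n * z).
Proof.
  intros H. induction n.
  - simpl. apply Gs_0.
  - replace (Z.of_nat (S n) * z)%Z with (Z.of_nat n * z + z)%Z by lia. apply Gs_add; auto.
Qed.

Lemma Gs_mul z w : Gs z -> Gs (w * z).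
Proof.
  intros H. destruct (Z.le_gt_cases 0 w) as [Hw|Hw].
  - replace w with (Z.of_nat (Z.to_nat w)) by (apply Z2Nat.id; auto). apply Gs_mul_nat; auto.
  - replace (w * z)%Z with (0 - Z.of_nat (Z.to_nat (- w)) * z)%Z by (rewrite Z2Nat.id; lia).
    apply Gs_sub; [apply Gs_0|]. apply Gs_mul_nat; auto.
Qed.

Lemma cyc_exists : exists k, cyc k.
Proof. destruct (cc_trans Hm Hc Hf HC _ _ Ca Ca Hdel) as [k Hk]. exists k; auto. Qed.

Lemma gcd_data : exists m, (1 <= m)%nat /\ Gs (Z.of_nat m) /\ forall z, Gs z -> (Z.of_nat m | z)%Z.
Proof.
  destruct (least_nat (fun n => (1 <= n)%nat /\ Gs (Z.of_nat n))) as [m [[Hm1 Hm2] Hmin]].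
  { destruct cyc_exists as [k Hk]. exists k. split. apply (chn_k Hk).
    exists k, 0%nat. unfold S0. split; auto. split; auto. lia. }
  exists m. split; auto. split; auto. intros z Hz.
  assert (Hr : Gs (z mod Z.of_nat m)).
  { rewrite Z.mod_eq by lia. apply Gs_sub; auto. rewrite Z.mul_comm. apply Gs_mul; auto. }
  pose proof (Z.mod_pos_bound z (Z.of_nat m) ltac:(lia)) as Hb.
  destruct (Z.eq_dec (z mod Z.of_nat m) 0) as [H0|H0].
  - apply Z.mod_divide; auto; lia.
  - exfalso. specialize (Hmin (Z.to_nat (z mod Z.of_nat m))).
    rewrite Z2Nat.id in Hmin by lia.
    assert (H1 : (1 <= Z.to_nat (z mod Z.of_nat m))%nat) by lia.
    specialize (Hmin (conj H1 Hr)). lia.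
Qed.

Lemma cyc_len k : cyc k -> cycle_length_in d f C del k.
Proof. intros [xs [Hc0 [E0 Ek]]]. exists xs. split; auto. congruence. Qed.

Lemma gcd_exists : exists m, (1 <= m)%nat /\ is_cycle_gcd d f C del m /\
  exists T, (1 <= T)%nat /\ forall k, (T <= k)%nat -> Nat.divide m k -> cyc k.
Proof.
  destruct gcd_data as [m [Hm1 [Hm2 Hm3]]].
  exists m. split; auto. split; [split|].
  - intros k [xs [Hk Ek]].
    assert (Cb : C (xs 0%nat)) by (apply (proj2 Hk); lia).
    destruct (cc_trans Hm Hc Hf HC _ _ Ca Cb Hdel) as [al Hal].
    destruct (cc_trans Hm Hc Hf HC _ _ Cb Ca Hdel) as [be Hbe].
    assert (Hb : chn d f C del (xs 0%nat) (xs 0%nat) k) by (exists xs; split; auto).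
    apply nat_Z_divide. replace (Z.of_nat k) with (Z.of_nat (al + k + be) - Z.of_nat (al + be))%Z by lia.
    apply Hm3. exists (al + k + be)%nat, (al + be)%nat. split; [|split; [|auto]].
    + right. apply (chn_cat (chn_cat Hal Hb) Hbe).
    + right. apply (chn_cat Hal Hbe).
  - intros m' Hm'. destruct Hm2 as [p [q [Hp [Hq E]]]].
    apply nat_Z_divide. rewrite E. apply Z.divide_sub_r.
    + destruct Hp as [->|Hp]. apply Z.divide_0_r. apply nat_Z_divide, Hm', cyc_len; auto.
    + destruct Hq as [->|Hq]. apply Z.divide_0_r. apply nat_Z_divide, Hm', cyc_len; auto.
  - destruct Hm2 as [p [q [Hp [Hq E]]]].
    assert (cyc_mul : forall s j, cyc s -> (1 <= j)%nat -> cyc (j * s)).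
    { intros s j Hs Hj. induction j as [|j IH]; [lia|].
      destruct (Nat.eq_dec j 0) as [->|Hj0]. simpl. rewrite Nat.add_0_r; auto.
      replace (S j * s)%nat with (j * s + s)%nat by lia. apply (chn_cat (IH ltac:(lia)) Hs). }
    destruct Hq as [->|Hq].
    + destruct Hp as [->|Hp]; [simpl in E; lia|].
      assert (p = m) by lia. subst p.
      exists m. split; auto. intros k Hk [j ->].
      apply cyc_mul; auto. destruct j; lia.
    + assert (Hdq : (Z.of_nat m | Z.of_nat q)%Z).
      { apply Hm3. exists q, 0%nat. split; [right; auto|]. split; [left; auto|]. lia. }
      apply nat_Z_divide in Hdq as [t Ht].
      assert (Hq1 := chn_k Hq).
      assert (Ht1 : (1 <= t)%nat) by (destruct t; simpl in Ht; lia).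
      destruct Hp as [Hp0|Hp]; [subst; lia|].
      assert (Hpq : p = (q + m)%nat) by lia.
      exists (t * t * m)%nat. split; [nia|].
      intros k Hk [j ->].
      assert (Hjt : (t * t <= j)%nat) by (apply Nat.mul_le_mono_pos_r with m; lia).
      set (u := (j / t)%nat). set (v := (j mod t)%nat).
      assert (Hj : j = (t * u + v)%nat) by (apply Nat.div_mod; lia).
      assert (Hv : (v < t)%nat) by (apply Nat.mod_upper_bound; lia).
      assert (Hu : (t <= u)%nat) by nia.
      replace (j * m)%nat with ((u - v) * q + v * p)%nat by (subst q p; rewrite Hj; nia).
      destruct (Nat.eq_dec v 0) as [Hv0|Hv0].
      * rewrite Hv0, Nat.mul_0_l, Nat.add_0_r. apply cyc_mul; auto; lia.
      * apply chn_cat with a; apply cyc_mul; auto; lia.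
Qed.

End Gcd.
Lemma list_max (I : Type) (r : I -> nat) (l : list I) : exists M, forall i, In i l -> (r i <= M)%nat.
Proof.
  induction l as [|a l [M HM]].
  - exists 0%nat; intros i [].
  - exists (Nat.max (r a) M). intros i [<-|Hi]. lia. specialize (HM i Hi). lia.
Qed.

Lemma gcd_unique X d f (C : X -> Prop) del m1 m2 :
  is_cycle_gcd d f C del m1 -> is_cycle_gcd d f C del m2 -> m1 = m2.
Proof.
  intros [H1 H1'] [H2 H2']. apply Nat.divide_antisym; auto.
Qed.

Section Res.
Variables (X : Type) (d : X -> X -> R) (f : X -> X).
Hypothesis Hm : is_metric d.
Hypothesis Hc : compact_space d.
Unset Implicit Arguments.
Hypothesis Hf : continuous_map d d f.
Set Implicit Arguments.
Variable C : X -> Prop.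
Hypothesis HC : chain_component d f C.

Lemma chn_cyc del u k : chn d f C del u u k -> cycle_length_in d f C del k.
Proof. intros [xs [Hc0 [E0 Ek]]]. exists xs. split; auto. congruence. Qed.

Lemma res_unique del m u v l1 l2 : 0 < del -> is_cycle_gcd d f C del m ->
  chn d f C del u v l1 -> chn d f C del u v l2 -> (Z.of_nat m | Z.of_nat l1 - Z.of_nat l2)%Z.
Proof.
  intros Hd [Hg _] H1 H2. destruct (chn_Pa H1) as [Cu Cv].
  destruct (cc_trans Hm Hc Hf HC _ _ Cv Cu Hd) as [s Hs].
  pose proof (Hg _ (chn_cyc (chn_cat H1 Hs))) as D1.
  pose proof (Hg _ (chn_cyc (chn_cat H2 Hs))) as D2.
  apply nat_Z_divide in D1, D2.
  replace (Z.of_nat l1 - Z.of_nat l2)%Z with (Z.of_nat (l1 + s) - Z.of_nat (l2 + s))%Z by lia.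
  apply Z.divide_sub_r; auto.
Qed.

Lemma self_sim del c : 0 < del -> C c -> sim_Cd d f C del c c.
Proof.
  intros Hd Cc. split; auto. split; auto.
  destruct (gcd_exists Hm Hc Hf HC Hd _ Cc) as [m [Hm1 [Hg [T [HT Hcyc]]]]].
  exists m. split; auto.
  destruct (Hcyc (T * m)%nat ltac:(nia) (Nat.divide_factor_r m T)) as [xs [Hxs [E0 Ek]]].
  exists xs, (T * m)%nat. split; [exact Hxs|]. split; [exact E0|]. split; [exact Ek|]. apply Nat.divide_factor_r.
Qed.

Lemma unif_len del m a : 0 < del -> is_cycle_gcd d f C del m -> C a ->
  exists T, forall b l l', C b -> (T <= l)%nat -> chn d f C del a b l' ->
    (Z.of_nat m | Z.of_nat l - Z.of_nat l')%Z -> chn d f C del a b l.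
Proof.
  intros Hd Hg Ca.
  destruct (gcd_exists Hm Hc Hf HC Hd _ Ca) as [m0 [Hm1 [Hg0 [Ta [HTa Hcyc]]]]].
  rewrite (gcd_unique Hg0 Hg) in Hcyc.
  set (P := fun p : X * nat * R => 0 < snd p /\ ((C (fst (fst p)) /\ snd p = del/2 /\ chn d f C (del/2) a (fst (fst p)) (snd (fst p))) \/ (~ C (fst (fst p)) /\ forall y, d (fst (fst p)) y < snd p -> ~ C y))).
  set (I := {p : X * nat * R | P p}).
  destruct (cover_fin Hm Hc (I := I) (fun i => fst (fst (proj1_sig i))) (fun i => snd (proj1_sig i))) as [l Hl].
  { intros x. destruct (classic (C x)) as [Cx|Cx].
    - destruct (cc_trans Hm Hc Hf HC _ _ Ca Cx (del := del/2) ltac:(lra)) as [k Hk].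
      assert (Pp : P (x, k, del/2)) by (unfold P; simpl; split; [lra|left; auto]).
      exists (exist P (x, k, del/2) Pp). simpl. rewrite (d_refl Hm). lra.
    - destruct (cc_closed Hm Hf HC x Cx) as [r [Hr Hq]].
      assert (Pp : P (x, 0%nat, r)) by (unfold P; simpl; split; [lra|right; auto]).
      exists (exist P (x, 0%nat, r) Pp). simpl. rewrite (d_refl Hm). lra. }
  destruct (list_max (fun i : I => snd (fst (proj1_sig i))) l) as [M HM].
  exists (Ta + M)%nat. intros b ln l' Cb Hl0 Hl' Hdiv.
  destruct (Hl b) as [[[[q k] r] Pp] [Hin Hqb]]. simpl in Hqb.
  specialize (HM _ Hin). simpl in HM.
  destruct Pp as [Hr [[Cq [Er Hk]]|[Cq Hq]]]; simpl in *.
  - subst r.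
    assert (Hkb : chn d f C del a b k).
    { apply chn_mono with (del/2 + del/2); [lra|]. eapply chn_last; eauto. lra. }
    pose proof (res_unique Hd Hg Hl' Hkb) as Hdk.
    assert (Hd2 : Nat.divide m (ln - k)).
    { apply nat_Z_divide. replace (Z.of_nat (ln - k)) with ((Z.of_nat ln - Z.of_nat l') + (Z.of_nat l' - Z.of_nat k))%Z by lia.
      apply Z.divide_add_r; auto. }
    replace ln with ((ln - k) + k)%nat by lia.
    apply chn_cat with a; auto. apply Hcyc; auto. lia.
  - exfalso. apply (Hq b Hqb Cb).
Qed.

End Res.
Lemma fin_max (n : nat) (P : nat -> nat -> Prop) :
  (forall j, (j < n)%nat -> exists M, forall i, (M <= i)%nat -> P j i) ->
  exists M, forall j, (j < n)%nat -> forall i, (M <= i)%nat -> P j i.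
Proof.
  induction n as [|n IH]; intros H.
  - exists 0%nat. intros; lia.
  - destruct IH as [M1 H1]. { intros j Hj; apply H; lia. }
    destruct (H n ltac:(lia)) as [M2 H2].
    exists (M1 + M2)%nat. intros j Hj i Hi.
    destruct (Nat.eq_dec j n) as [->|Hne]. apply H2; lia. apply H1; lia.
Qed.

Lemma gcd_mono X d f (C : X -> Prop) b1 b2 m1 m2 : b1 <= b2 ->
  is_cycle_gcd d f C b1 m1 -> is_cycle_gcd d f C b2 m2 -> Nat.divide m2 m1.
Proof.
  intros Hb [H1 H1'] [H2 H2']. apply H1'. intros k [xs [[[Hk Hx] Px] E]].
  apply H2. exists xs. split; auto. split; auto. split; auto.
  intros i Hi; specialize (Hx i Hi); lra.
Qed.

Lemma Csel X (d : X -> X -> R) (f : X -> X) (C : X -> Prop) x :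
  (exists c, C c) -> Ws d f C x ->
  exists c : nat -> X, (forall i, C (c i)) /\
    forall eta, 0 < eta -> exists M, forall i, (M <= i)%nat -> d (iter f i x) (c i) < eta.
Proof.
  intros [c0 Cc0] HW.
  assert (Hp : forall p t, exists c, C c /\ forall k, (k <= t)%nat ->
            (exists c', C c' /\ d p c' < / (INR k + 1)) -> d p c < / (INR k + 1)).
  { intros p t. induction t as [|t [c [Cc Hc]]].
    - destruct (classic (exists c', C c' /\ d p c' < / (INR 0 + 1))) as [[c' [Cc' Hc']]|Hn].
      + exists c'. split; auto. intros k Hk _. assert (k = 0%nat) by lia. subst; auto.
      + exists c0. split; auto. intros k Hk Hex. assert (k = 0%nat) by lia. subst. contradiction.
    - destruct (classic (exists c', C c' /\ d p c' < / (INR (S t) + 1))) as [[c' [Cc' Hc']]|Hn].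
      + exists c'. split; auto. intros k Hk _.
        apply Rlt_le_trans with (/ (INR (S t) + 1)); auto.
        apply Rinv_le_contravar. pose proof (pos_INR k); lra.
        apply Rplus_le_compat_r. apply le_INR; auto.
      + exists c. split; auto. intros k Hk Hex. destruct (Nat.eq_dec k (S t)) as [->|Hne].
        contradiction. apply Hc; auto; lia. }
  exists (fun i => proj1_sig (constructive_indefinite_description _ (Hp (iter f i x) i))).
  split.
  - intros i. destruct (constructive_indefinite_description _ (Hp (iter f i x) i)) as [c [Cc Hc]]; auto.
  - intros eta Heta. destruct (archimed_cor1 eta Heta) as [k [Hk Hk0]].
    destruct (HW (/ (INR k + 1))) as [N HN].
    { apply Rinv_0_lt_compat. pose proof (pos_INR k); lra. }
    exists (N + k)%nat. intros i Hi.
    destruct (constructive_indefinite_description _ (Hp (iter f i x) i)) as [c [Cc Hc]]; simpl.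
    assert (/ (INR k + 1) < eta).
    { apply Rle_lt_trans with (/ INR k); auto. apply Rinv_le_contravar.
      apply lt_0_INR; lia. lra. }
    specialize (Hc k ltac:(lia) (HN i ltac:(lia))). lra.
Qed.
Section Main.
Unset Implicit Arguments.
Variables (X Y : Type) (d : X -> X -> R) (d' : Y -> Y -> R).
Hypotheses (Hm : is_metric d) (Hc : compact_space d) (Hm' : is_metric d') (Hc' : compact_space d').
Variables (f : X -> X) (g : Y -> Y).
Hypotheses (Hf : continuous_map d d f) (Hg : continuous_map d' d' g).
Variables (C D : X -> Prop) (C' : Y -> Prop) (h : X -> Y).
Hypotheses (HC : chain_component d f C) (HC' : chain_component d' g C')
  (Hh : homeo_on d d' C C' h) (Hconj : forall x, C x -> h (f x) = g (h x)).
Variable x0 : X.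
Hypothesis Cx0 : C x0.
Hypothesis HDx0 : forall y, D y <-> (C y /\ sim_C d f C x0 y).

Let D' := image h D.

Lemma hC x : C x -> C' (h x).
Proof. destruct Hh as [H _]; auto. Qed.

Lemma h_unif eps : 0 < eps -> exists th, 0 < th /\ forall a b, C a -> C b -> d a b < th -> d' (h a) (h b) < eps.
Proof.
  intros He. destruct Hh as [Hmap [Hinj [Hsurj [Hcont Hicont]]]].
  destruct (unif Hm Hc (K := C) (fun a b => d' (h a) (h b) < eps) (cc_closed Hm Hf HC)) as [r [Hr Hq]].
  - intros x Cx. destruct (Hcont x (eps/2) Cx ltac:(lra)) as [del [Hd Hq]].
    exists del. split; auto. intros y1 y2 C1 C2 H1 H2.
    pose proof (Hq y1 C1 H1). pose proof (Hq y2 C2 H2).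
    pose proof (d_tri Hm' (h y1) (h x) (h y2)). rewrite (d_sym Hm' (h y1) (h x)) in *. lra.
  - exists r. split; auto.
Qed.

Lemma hinv_unif eps : 0 < eps -> exists eta, 0 < eta /\ forall a b, C a -> C b -> d' (h a) (h b) < eta -> d a b < eps.
Proof.
  intros He. destruct Hh as [Hmap [Hinj [Hsurj [Hcont Hicont]]]].
  destruct (unif Hm' Hc' (K := C') (fun y1 y2 => forall a b, C a -> C b -> h a = y1 -> h b = y2 -> d a b < eps) (cc_closed Hm' Hg HC')) as [r [Hr Hq]].
  - intros y Cy. destruct (Hsurj y Cy) as [x [Cx <-]].
    destruct (Hicont x (eps/2) Cx ltac:(lra)) as [del [Hd Hq]].
    exists del. split; auto. intros y1 y2 C1 C2 H1 H2 a b Ca Cb <- <-.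
    pose proof (Hq a Ca H1). pose proof (Hq b Cb H2).
    pose proof (d_tri Hm a x b). rewrite (d_sym Hm a x) in *. lra.
  - exists r. split; auto. intros a b Ca Cb Hab. apply (Hq (h a) (h b)); auto; apply Hmap; auto.
Qed.

Lemma conj_iter x i : C x -> h (iter f i x) = iter g i (h x).
Proof.
  intros Cx. induction i.
  - reflexivity.
  - change (h (f (iter f i x)) = g (iter g i (h x))). rewrite Hconj, IHi; auto.
    apply (cc_iter Hm Hf HC); auto.
Qed.

Lemma chain_map beta : 0 < beta -> exists del, 0 < del /\
  forall a b k, chn d f C del a b k -> chn d' g C' beta (h a) (h b) k.
Proof.
  intros Hb. destruct (h_unif beta Hb) as [th [Hth Hu]].
  exists (th/2). split; [lra|]. intros a b k [xs [[[Hk Hx] Px] [E0 Ek]]].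
  exists (fun i => h (xs i)). split; [split; [split|]|split].
  - auto.
  - intros i Hi. rewrite <- Hconj by (apply Px; lia).
    apply Rlt_le. apply Hu. apply (cc_inv Hm Hf HC); apply Px; lia. apply Px; lia.
    specialize (Hx i Hi). lra.
  - intros i Hi. apply hC, Px; auto.
  - rewrite E0; auto.
  - rewrite Ek; auto.
Qed.

Lemma gcd_div del beta m m' :
  (forall a b k, chn d f C del a b k -> chn d' g C' beta (h a) (h b) k) ->
  is_cycle_gcd d f C del m -> is_cycle_gcd d' g C' beta m' -> Nat.divide m' m.
Proof.
  intros Hmap [_ H1] [H2 _]. apply H1. intros k [xs [Hxs E]].
  apply H2. apply (chn_cyc (u := h (xs 0%nat))). apply Hmap. exists xs. split; auto.
Qed.

Lemma gcdY_exists beta : 0 < beta -> exists m, is_cycle_gcd d' g C' beta m.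
Proof.
  intros Hb. destruct (gcd_exists Hm' Hc' Hg HC' Hb (h x0) (hC x0 Cx0)) as [m [_ [H _]]]. eauto.
Qed.

Lemma phaseD' beta m' : 0 < beta -> is_cycle_gcd d' g C' beta m' ->
  forall y, D_delta d' g C' D' beta y -> exists l, chn d' g C' beta (h x0) y l /\ Nat.divide m' l.
Proof.
  intros Hb Hg' y [Cy [u [[u0 [Du0 <-]] [Cu [_ [m1 [Hm1 [xs [k [Hxs [E0 [Ek Hdk]]]]]]]]]]]].
  rewrite (gcd_unique Hm1 Hg') in Hdk.
  destruct (chain_map beta Hb) as [del [Hd Hmap]].
  apply HDx0 in Du0 as [Cu0 Hsim].
  destruct (Hsim del Hd) as [_ [_ [mX [HmX [ys [k0 [Hys [F0 [Fk Hdk0]]]]]]]]].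
  assert (H0 : chn d f C del x0 u0 k0) by (exists ys; auto).
  apply Hmap in H0.
  pose proof (gcd_div del beta mX m' Hmap HmX Hg') as Hdiv.
  exists (k0 + k)%nat. split.
  - apply chn_cat with (h u0); auto. exists xs; auto.
  - apply Nat.divide_add_r; auto. eapply Nat.divide_trans; eauto.
Qed.

Lemma phaseD beta m' : 0 < beta -> is_cycle_gcd d' g C' beta m' ->
  exists del, 0 < del /\ forall y', D_delta d f C D del y' ->
    (exists l, chn d' g C' beta (h x0) (h y') l /\ Nat.divide m' l) /\ D_delta d' g C' D' beta (h y').
Proof.
  intros Hb Hg'. destruct (chain_map beta Hb) as [del [Hd Hmap]].
  exists del. split; auto.
  intros y' [Cy' [u0 [Du0 [Cu0 [_ [mX [HmX [xs [k1 [Hxs [E0 [Ek Hdk1]]]]]]]]]]]].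
  pose proof Du0 as Du0'.
  apply HDx0 in Du0 as [_ Hsim].
  destruct (Hsim del Hd) as [_ [_ [mX' [HmX' [ys [k0 [Hys [F0 [Fk Hdk0]]]]]]]]].
  rewrite (gcd_unique HmX' HmX) in Hdk0.
  assert (H0 : chn d f C del x0 u0 k0) by (exists ys; auto).
  assert (H1 : chn d f C del u0 y' k1) by (exists xs; auto).
  pose proof (gcd_div del beta mX m' Hmap HmX Hg') as Hdiv.
  split.
  - exists (k0 + k1)%nat. split.
    + apply Hmap. apply chn_cat with u0; auto.
    + apply Nat.divide_add_r; eapply Nat.divide_trans; eauto.
  - split. apply hC; auto.
    exists (h u0). split. exists u0; auto.
    apply Hmap in H1. destruct H1 as [zs [Hzs [Z0 Zk]]].
    split. apply hC; auto. split. apply hC; auto.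
    exists m'. split; auto. exists zs, k1. split; auto. split; auto. split; auto.
    eapply Nat.divide_trans; eauto.
Qed.

Lemma D_x0 : D x0.
Proof.
  apply HDx0. split; auto. intros del Hd. apply (self_sim Hm Hc Hf HC x0 Hd Cx0).
Qed.

Lemma Vs_nonempty : Vs d' g C' D' (h x0).
Proof.
  intros beta Hb. split.
  - intros eps He. exists 0%nat. intros i _. exists (iter g i (h x0)). split.
    apply (cc_iter Hm' Hg HC'). apply hC; auto. rewrite (d_refl Hm'); auto.
  - intros eps He. exists 0%nat. intros i _. exists (h x0). split.
    + split. apply hC; auto. exists (h x0). split. exists x0. split; auto. apply D_x0.
      apply (self_sim Hm' Hc' Hg HC' (h x0) Hb). apply hC; auto.
    + rewrite (d_refl Hm'); auto.
Qed.

Definition asym (x : X) (c : nat -> X) := forall eta, 0 < eta -> exists M, forall i, (M <= i)%nat -> d (iter f i x) (c i) < eta.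
Definition asymY (w : Y) (c : nat -> X) := forall eta, 0 < eta -> exists M, forall i, (M <= i)%nat -> d' (iter g i w) (h (c i)) < eta.

Lemma tail_err x c : (forall i, C (c i)) -> asym x c ->
  forall eta, 0 < eta -> exists M, forall i, (M <= i)%nat -> d' (g (h (c i))) (h (c (S i))) < eta.
Proof.
  intros Cc Ha eta He.
  destruct (h_unif eta He) as [th [Hth Hu]].
  destruct (unif_f Hm Hc Hf (eps := th/2) ltac:(lra)) as [thf [Hthf Huf]].
  destruct (Ha (Rmin thf (th/2)) ltac:(apply Rmin_glb_lt; lra)) as [M HM].
  exists M. intros i Hi. rewrite <- Hconj by auto. apply Hu; auto. apply (cc_inv Hm Hf HC); auto.
  pose proof (HM i Hi). pose proof (HM (S i) ltac:(lia)).
  pose proof (Rmin_l thf (th/2)). pose proof (Rmin_r thf (th/2)).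
  assert (d (f (c i)) (f (iter f i x)) < th/2) by (apply Huf; rewrite (d_sym Hm); lra).
  pose proof (d_tri Hm (f (c i)) (f (iter f i x)) (c (S i))).
  change (iter f (S i) x) with (f (iter f i x)) in H0. lra.
Qed.

Lemma asym_Vs x c w : Vs d f C D x -> (forall i, C (c i)) -> asym x c -> asymY w c -> Vs d' g C' D' w.
Proof.
  intros Hx Cc Ha Hw beta Hb. split.
  - intros eta He. destruct (Hw eta He) as [M HM]. exists M. intros i Hi.
    exists (h (c i)). split; auto. apply hC; auto.
  - intros eta He. destruct (gcdY_exists beta Hb) as [m' Hg'].
    destruct (phaseD beta m' Hb Hg') as [del [Hd HpD]].
    destruct (h_unif (eta/2) ltac:(lra)) as [th [Hth Hu]].
    destruct (Hx del Hd) as [_ Hx2].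
    destruct (Hx2 (th/2) ltac:(lra)) as [N1 HN1].
    destruct (Ha (th/2) ltac:(lra)) as [N2 HN2].
    destruct (Hw (eta/2) ltac:(lra)) as [N3 HN3].
    exists (N1 + N2 + N3)%nat. intros i Hi.
    destruct (HN1 i ltac:(lia)) as [y' [Hy' Hd1]].
    destruct (HpD y' Hy') as [_ HD'].
    exists (h y'). split; auto.
    assert (Cy' : C y') by (destruct Hy'; auto).
    rewrite <- conj_iter by auto.
    assert (d' (h (c i)) (h (iter f i y')) < eta/2).
    { apply Hu; auto. apply (cc_iter Hm Hf HC); auto.
      pose proof (HN2 i ltac:(lia)) as Q1. pose proof (d_tri Hm (c i) (iter f i x) (iter f i y')) as Q2.
      rewrite (d_sym Hm (c i) (iter f i x)) in Q2. lra. }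
    pose proof (HN3 i ltac:(lia)).
    pose proof (d_tri Hm' (iter g i w) (h (c i)) (h (iter f i y'))). lra.
Qed.

Lemma construct z x c eps : Vs d' g C' D' z -> Vs d f C D x -> (forall i, C (c i)) -> asym x c ->
  0 < eps -> s_limit_shadowing d' g -> exists w, d' w z < eps /\ asymY w c.
Proof.
  intros Hz Hx Cc Ha He Hsh.
  destruct (Hsh (eps/2) ltac:(lra)) as [d0 [Hd0 Hsh0]].
  destruct (gcdY_exists d0 Hd0) as [m0 Hm0].
  destruct (gcdY_exists (d0/2) ltac:(lra)) as [mh Hmh].
  assert (Hdiv : Nat.divide m0 mh) by (apply (gcd_mono (b1 := d0/2) (b2 := d0) ltac:(lra) Hmh Hm0)).
  destruct (phaseD (d0/2) mh ltac:(lra) Hmh) as [dx [Hdx HM7]].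
  destruct (h_unif (d0/2) ltac:(lra)) as [th1 [Hth1 HU1]].
  destruct (tail_err x c Cc Ha d0 Hd0) as [K3 HK3].
  destruct (Hz (d0/2) ltac:(lra)) as [_ Hz2].
  destruct (Hz2 (d0/2) ltac:(lra)) as [N1 HN1].
  set (N := S N1).
  destruct (HN1 N ltac:(unfold N; lia)) as [y [Hy Hzy]].
  destruct (phaseD' (d0/2) mh ltac:(lra) Hmh y Hy) as [l [Hl Hdl]].
  assert (Cy : C' y) by (destruct Hy; auto).
  set (a := iter g N y).
  assert (Hinvg : forall u, C' u -> C' (g u)) by (apply (cc_inv Hm' Hg HC')).
  assert (Hoa : chn d' g C' d0 (h x0) a (l + N)).
  { apply chn_cat with y. apply chn_mono with (d0/2); [lra|]; auto.
    apply (chn_orbit g Hm' C' y (t := N)); auto; try lra. unfold N; lia. }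
  assert (Ca : C' a) by (apply (cc_iter Hm' Hg HC'); auto).
  destruct (unif_len Hm' Hc' Hg HC' a Hd0 Hm0 Ca) as [T HT].
  destruct (Hx dx Hdx) as [_ Hx2].
  destruct (Hx2 (th1/2) ltac:(lra)) as [K1 HK1].
  destruct (Ha (th1/2) ltac:(lra)) as [K2 HK2].
  set (K := (N + T + K1 + K2 + K3 + 1)%nat).
  destruct (HK1 K ltac:(unfold K; lia)) as [y' [Hy' Hxy']].
  destruct (HM7 y' Hy') as [[l' [Hl' Hdl']] _].
  assert (Cy' : C y') by (destruct Hy'; auto).
  set (b := h (c K)).
  assert (Cb : C' b) by (apply hC; auto).
  assert (Hob : chn d' g C' d0 (h x0) b (l' + K)).
  { apply chn_mono with (d0/2 + d0/2); [lra|].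
    apply (chn_last Hm') with (h (iter f K y')); auto.
    - apply chn_cat with (h y'); auto. rewrite conj_iter by auto.
      apply (chn_orbit g Hm' C' (h y') (t := K)); auto; try lra. apply hC; auto. unfold K; lia.
    - apply Rlt_le. apply HU1; auto. apply (cc_iter Hm Hf HC); auto.
      pose proof (HK2 K ltac:(unfold K; lia)).
      pose proof (d_tri Hm (iter f K y') (iter f K x) (c K)).
      rewrite (d_sym Hm (iter f K y') (iter f K x)) in H0. lra. }
  destruct (cc_trans Hm' Hc' Hg HC' a b Ca Cb Hd0) as [L' HL'].
  pose proof (res_unique Hm' Hc' Hg HC' Hd0 Hm0 (chn_cat Hoa HL') Hob) as Hres.
  assert (Dl : Nat.divide m0 l) by (apply (Nat.divide_trans _ _ _ Hdiv Hdl)).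
  assert (Dl' : Nat.divide m0 l') by (apply (Nat.divide_trans _ _ _ Hdiv Hdl')).
  apply nat_Z_divide in Dl, Dl'.
  assert (Hab : chn d' g C' d0 a b (K - N)).
  { apply (HT b (K - N)%nat L'); auto. unfold K; lia.
    replace (Z.of_nat (K - N) - Z.of_nat L')%Z with
      (Z.of_nat l - Z.of_nat l' - (Z.of_nat (l + N + L') - Z.of_nat (l' + K)))%Z by (unfold K; lia).
    apply Z.divide_sub_r; auto. apply Z.divide_sub_r; auto. }
  destruct Hab as [ch [[[Hk Hch] Pch] [E0 Ek]]].
  set (ys := fun i => if Nat.ltb i N then iter g i z else if Nat.leb i K then ch (i - N)%nat else h (c i)).
  assert (V1 : forall i, (i < N)%nat -> ys i = iter g i z).
  { intros i Hi. unfold ys. rewrite (proj2 (Nat.ltb_lt i N) Hi); auto. }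
  assert (V2 : forall i, (N <= i)%nat -> (i <= K)%nat -> ys i = ch (i - N)%nat).
  { intros i H1 H2. unfold ys. rewrite (proj2 (Nat.ltb_ge i N) H1), (proj2 (Nat.leb_le i K) H2); auto. }
  assert (V3 : forall i, (K <= i)%nat -> ys i = h (c i)).
  { intros i Hi. destruct (Nat.eq_dec i K) as [->|Hne].
    - rewrite V2 by (unfold K; lia). rewrite Ek; auto.
    - unfold ys. rewrite (proj2 (Nat.ltb_ge i N)) by (unfold K in *; lia).
      rewrite (proj2 (Nat.leb_gt i K)) by lia; auto. }
  assert (Herr : forall i, d' (g (ys i)) (ys (S i)) <= d0).
  { intros i. destruct (le_lt_dec N (S i)) as [H1|H1].
    - destruct (Nat.eq_dec (S i) N) as [H2|H2].
      + rewrite V1 by lia. rewrite H2, V2 by (unfold K; lia). rewrite Nat.sub_diag, E0.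
        change (g (iter g i z)) with (iter g (S i) z). rewrite H2. unfold a. lra.
      + destruct (le_lt_dec K i) as [H3|H3].
        * rewrite V3, V3 by lia. apply Rlt_le, HK3; lia.
        * rewrite V2, V2 by lia. replace (S i - N)%nat with (S (i - N)) by lia. apply Hch; lia.
    - rewrite V1, V1 by lia. change (g (iter g i z)) with (iter g (S i) z).
      rewrite (d_refl Hm'); lra. }
  assert (Hlim : forall eta, 0 < eta -> exists M, forall i, (M <= i)%nat -> d' (g (ys i)) (ys (S i)) < eta).
  { intros eta Heta. destruct (tail_err x c Cc Ha eta Heta) as [M HM].
    exists (M + K)%nat. intros i Hi. rewrite V3, V3 by lia. apply HM; lia. }
  destruct (Hsh0 ys Herr Hlim) as [w [Hw1 Hw2]].
  exists w. split.
  - specialize (Hw1 0%nat). rewrite V1 in Hw1 by (unfold N; lia). simpl in Hw1. lra.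
  - intros eta Heta. destruct (Hw2 eta Heta) as [M HM]. exists (M + K)%nat. intros i Hi.
    rewrite <- V3 by lia. apply HM; lia.
Qed.

Theorem main_sec (F G : (nat -> Prop) -> Prop) (n : nat) (del : R) :
  furstenberg F -> full_family F -> furstenberg G -> full_family G ->
  (2 <= n)%nat -> 0 < del -> s_limit_shadowing d' g ->
  dense_chaotic d f F G n del (Vs d f C D) ->
  exists del', 0 < del' /\ dense_chaotic d' g F G n del' (Vs d' g C' D').
Proof.
  intros HF HFf HG HGf Hn Hdel Hsh [[p Hp] Hdense].
  destruct (Hdense (fun _ => p) (fun j _ => Hp) 1 Rlt_0_1) as [xs [Hxs [Hscr _]]].
  assert (Hcs : forall j, exists c : nat -> X, (j < n)%nat -> (forall i, C (c i)) /\ asym (xs j) c).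
  { intros j. destruct (lt_dec j n) as [Hj|Hj].
    - destruct (Hxs j Hj 1 Rlt_0_1) as [HW _].
      destruct (Csel (ex_intro (fun c => C c) x0 Cx0) HW) as [c [Hc1 Hc2]].
      exists c. intros _. split; auto.
    - exists (fun _ => x0). intros; lia. }
  set (cs := fun j => proj1_sig (constructive_indefinite_description _ (Hcs j))).
  assert (Hcs' : forall j, (j < n)%nat -> (forall i, C (cs j i)) /\ asym (xs j) (cs j)).
  { intros j Hj. unfold cs. destruct (constructive_indefinite_description _ (Hcs j)) as [c Hcc]; simpl; auto. }
  destruct (hinv_unif (del/2) ltac:(lra)) as [eta0 [Heta0 Hinv]].
  exists (eta0/4). split; [lra|]. split.
  { exists (h x0). apply Vs_nonempty. }
  intros zs Hzs eps Heps.
  assert (Hw : forall j, exists w, (j < n)%nat -> Vs d' g C' D' w /\ d' w (zs j) < eps /\ asymY w (cs j)).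
  { intros j. destruct (lt_dec j n) as [Hj|Hj].
    - destruct (Hcs' j Hj) as [Cc Ha].
      destruct (construct (zs j) (xs j) (cs j) eps (Hzs j Hj) (Hxs j Hj) Cc Ha Heps Hsh) as [w [Hw1 Hw2]].
      exists w. intros _. split; [|split]; auto. apply (asym_Vs (xs j) (cs j)); auto.
    - exists (zs 0%nat). intros; lia. }
  set (ws := fun j => proj1_sig (constructive_indefinite_description _ (Hw j))).
  assert (Hws : forall j, (j < n)%nat -> Vs d' g C' D' (ws j) /\ d' (ws j) (zs j) < eps /\ asymY (ws j) (cs j)).
  { intros j Hj. unfold ws. destruct (constructive_indefinite_description _ (Hw j)) as [w Hw']; simpl; auto. }
  exists ws. split; [|split].
  - intros j Hj. apply Hws; auto.
  - destruct Hscr as [HS HT]. split.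
    + destruct (fin_max (n := n) (fun j i => d' (iter g i (ws j)) (h (cs j i)) < eta0/4 /\ d (iter f i (xs j)) (cs j i) < del/4)) as [M HM].
      { intros j Hj. destruct (Hws j Hj) as [_ [_ Ha]]. destruct (Hcs' j Hj) as [_ Ha'].
        destruct (Ha (eta0/4) ltac:(lra)) as [M1 HM1]. destruct (Ha' (del/4) ltac:(lra)) as [M2 HM2].
        exists (M1 + M2)%nat. intros i Hi. split; [apply HM1|apply HM2]; lia. }
      destruct HF as [_ [_ HFup]].
      apply (HFup _ _ (HFf _ M HS)). intros i [HSi Hi] j k Hjk Hkn.
      specialize (HSi j k Hjk Hkn).
      destruct (HM j ltac:(lia) i Hi) as [A1 A2]. destruct (HM k Hkn i Hi) as [B1 B2].
      destruct (Hcs' j ltac:(lia)) as [Cj _]. destruct (Hcs' k Hkn) as [Ck _].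
      assert (Hfar : eta0 <= d' (h (cs j i)) (h (cs k i))).
      { apply Rnot_lt_le. intros Hlt. specialize (Hinv _ _ (Cj i) (Ck i) Hlt).
        pose proof (d_tri Hm (iter f i (xs j)) (cs j i) (iter f i (xs k))) as Q1.
        pose proof (d_tri Hm (cs j i) (cs k i) (iter f i (xs k))) as Q2.
        rewrite (d_sym Hm (cs k i) (iter f i (xs k))) in Q2. lra. }
      pose proof (d_tri Hm' (h (cs j i)) (iter g i (ws j)) (h (cs k i))) as Q1.
      pose proof (d_tri Hm' (iter g i (ws j)) (iter g i (ws k)) (h (cs k i))) as Q2.
      rewrite (d_sym Hm' (h (cs j i)) (iter g i (ws j))) in Q1.
      lra.
    + intros e2 He2.
      destruct (h_unif (e2/3) ltac:(lra)) as [th [Hth Hu]].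
      destruct (fin_max (n := n) (fun j i => d' (iter g i (ws j)) (h (cs j i)) < e2/3 /\ d (iter f i (xs j)) (cs j i) < th/3)) as [M HM].
      { intros j Hj. destruct (Hws j Hj) as [_ [_ Ha]]. destruct (Hcs' j Hj) as [_ Ha'].
        destruct (Ha (e2/3) ltac:(lra)) as [M1 HM1]. destruct (Ha' (th/3) ltac:(lra)) as [M2 HM2].
        exists (M1 + M2)%nat. intros i Hi. split; [apply HM1|apply HM2]; lia. }
      destruct HG as [_ [_ HGup]].
      apply (HGup _ _ (HGf _ M (HT (th/3) ltac:(lra)))). intros i [HTi Hi] j k Hjk Hkn.
      specialize (HTi j k Hjk Hkn).
      destruct (HM j ltac:(lia) i Hi) as [A1 A2]. destruct (HM k Hkn i Hi) as [B1 B2].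
      destruct (Hcs' j ltac:(lia)) as [Cj _]. destruct (Hcs' k Hkn) as [Ck _].
      assert (Hnear : d' (h (cs j i)) (h (cs k i)) < e2/3).
      { apply Hu; auto.
        pose proof (d_tri Hm (cs j i) (iter f i (xs j)) (cs k i)) as Q1.
        pose proof (d_tri Hm (iter f i (xs j)) (iter f i (xs k)) (cs k i)) as Q2.
        rewrite (d_sym Hm (cs j i) (iter f i (xs j))) in Q1. lra. }
      pose proof (d_tri Hm' (iter g i (ws j)) (h (cs j i)) (iter g i (ws k))) as Q1.
      pose proof (d_tri Hm' (h (cs j i)) (h (cs k i)) (iter g i (ws k))) as Q2.
      rewrite (d_sym Hm' (h (cs k i)) (iter g i (ws k))) in Q2. lra.
  - intros j Hj. apply Hws; auto.
Qed.

End Main.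

Theorem corollary1p1 :
  forall (X Y : Type) (d : X -> X -> R) (d' : Y -> Y -> R),
    is_metric d -> compact_space d -> is_metric d' -> compact_space d' ->
  forall (f : X -> X) (g : Y -> Y),
    continuous_map d d f -> continuous_map d' d' g ->
  forall (C D : X -> Prop) (C' : Y -> Prop) (h : X -> Y),
    chain_component d f C -> D_class d f C D -> chain_component d' g C' ->
    homeo_on d d' C C' h -> (forall x, C x -> h (f x) = g (h x)) ->
  forall (F G : (nat -> Prop) -> Prop),
    furstenberg F -> full_family F -> furstenberg G -> full_family G ->
  forall (n : nat) (del : R), (2 <= n)%nat -> 0 < del ->
    s_limit_shadowing d' g ->
    dense_chaotic d f F G n del (Vs d f C D) ->
    exists del', 0 < del' /\ dense_chaotic d' g F G n del' (Vs d' g C' (image h D)).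
Proof.
  intros X Y d d' Hm Hc Hm' Hc' f g Hf Hg C D C' h HC [x0 [Cx0 HDx0]] HC' Hh Hconj.
  intros F G HF HFf HG HGf n del Hn Hdel Hsh Hch.
  exact (main_sec X Y d d' Hm Hc Hm' Hc' f g Hf Hg C D C' h HC HC' Hh Hconj x0 Cx0 HDx0
           F G n del HF HFf HG HGf Hn Hdel Hsh Hch).
Qed.
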